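(* Let $A_1,\ldots,A_n$ be events in a probability space and let $X$ be the number of these events that occur. Let $k$ be an integer with $1\le k<n$. For distinct indices $i_1,\ldots,i_k\in\{1,\ldots,n\}$ and $1\le s\le n-k$, let $W_s(i_1,\ldots,i_k)$ be the $s$-th largest of the $n-k$ values $P(A_{i_1}\cdots A_{i_k}A_j)$, $j\in\{1,\ldots,n\}\setminus\{i_1,\ldots,i_k\}$ (counted with multiplicity). Then $$E\left[\binom{X-1}{k}\right]\ge\sum_{1\le i_1<\cdots<i_k\le n}\ \sum_{s=1}^{n-k}W_s(i_1,\ldots,i_k)\frac{k}{(k+s)(k+s-1)}.$$
   Context: Binomial convention: for integers $s,t$, $\binom{t}{s}=0$ if $\min(s,t)<0$ or $s>t$; otherwise $\binom{t}{s}=\frac{t!}{s!(t-s)!}$. $A_{i_1}\cdots A_{i_k}A_j$ denotes the intersection of the events. *)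

(* Defs.v *)
From HB Require Import structures.
From mathcomp Require Import all_boot all_order all_algebra.
From mathcomp Require Import all_classical all_reals all_analysis.
Set Implicit Arguments. Unset Strict Implicit. Unset Printing Implicit Defensive.
Import Order.TTheory GRing.Theory Num.Theory.
Local Open Scope classical_set_scope.
Local Open Scope ring_scope.

Definition count_occ (T : Type) (n : nat) (A : 'I_n -> set T) (t : T) : nat :=
  #|[set i : 'I_n | `[< A i t >]]|.

Definition inter_ev (T : Type) (n : nat) (A : 'I_n -> set T)
  (S : {set 'I_n}) (j : 'I_n) : set T :=
  [set t | forall i, i \in S -> A i t] `&` A j.

Definition W (d : measure_display) (T : measurableType d) (R : realType)
  (P : probability T R) (n : nat) (A : 'I_n -> set T)
  (S : {set 'I_n}) (s : nat) : R :=
  nth 0 (sort (fun x y : R => y <= x)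
              [seq fine (P (inter_ev A S j)) | j <- enum (~: S)]) s.-1.

(* Main.v *)
Require Import Defs.
From HB Require Import structures.
From mathcomp Require Import all_boot all_order all_algebra.
From mathcomp Require Import all_classical all_reals all_analysis.
From mathcomp Require Import zify ring lra.
From mathcomp Require Import measurable_realfun.
Import Order.TTheory GRing.Theory Num.Theory.
Local Open Scope classical_set_scope.
Local Open Scope ring_scope.

Lemma seq_bound (R : realDomainType) (b : seq bool) : forall (c : nat -> R),
  (forall i, 0 <= c i) -> (forall i, c i.+1 <= c i) ->
  \sum_(0 <= i < size b) c i * (nth false b i)%:R <= \sum_(0 <= i < count id b) c i.
Proof.
elim: b => [|x b IH] c c0 cd; first by rewrite !big_geq.
rewrite /= big_nat_recl //.
have := IH (fun i => c i.+1) (fun i => c0 _) (fun i => cd _) => /= H.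
case: x => /=.
  rewrite add1n big_nat_recl // mulr1 lerD2l; exact: H.
rewrite mulr0 add0r add0n (le_trans H) //.
by apply: ler_sum => i _.
Qed.

Definition cc (R : realType) (k s : nat) : R := k%:R / (((k + s) * (k + s - 1))%N)%:R.

Lemma cc_ge0 (R : realType) k s : 0 <= cc R k s.
Proof. by rewrite /cc divr_ge0. Qed.

Lemma cc_dec (R : realType) k i : (1 <= k)%N -> cc R k i.+2 <= cc R k i.+1.
Proof.
move=> k1; rewrite /cc ler_pM2l ?ltr0n; last lia.
rewrite lef_pV2 ?posrE ?ltr0n ?muln_gt0 ?ler_nat; try lia.
Qed.

Lemma cc_sum (R : realType) k r : (1 <= k)%N ->
  \sum_(0 <= i < r) cc R k i.+1 = r%:R / (k + r)%:R.
Proof.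
move=> k1; elim: r => [|r IH]; first by rewrite big_geq // mul0r.
rewrite big_nat_recr //= IH /cc.
have h1 : ((k + r.+1 - 1) = k + r)%N by lia.
rewrite h1 natrM.
have a : (k + r)%:R != 0 :> R by rewrite pnatr_eq0; lia.
have b : (k + r.+1)%:R != 0 :> R by rewrite pnatr_eq0; lia.
apply/eqP; rewrite -subr_eq0; apply/eqP.
rewrite addnS !mulrSr !natrD in a b *.
field; rewrite ?a ?b //=; move: b; rewrite -natrD -addrA -natr1 -natrD; by [].

Qed.

Lemma point_bound (R : realType) n k (k1 : (1 <= k)%N) (O : {set 'I_n})
  (L : {set 'I_n} -> seq 'I_n)
  (HL : forall S : {set 'I_n}, #|S| = k -> [/\ uniq (L S), size (L S) = (n - k)%N & {subset L S <= ~: S}])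
  (j0 : 'I_n) :
  \sum_(S : {set 'I_n} | #|S| == k) \sum_(0 <= i < n - k)
     cc R k i.+1 * ((S \subset O) && (nth j0 (L S) i \in O))%:R
  <= ('C(#|O|.-1, k))%:R.
Proof.
set m := #|O|.
set v : R := (m - k)%:R / m%:R.
have step : forall S : {set 'I_n}, #|S| == k ->
    \sum_(0 <= i < n - k) cc R k i.+1 * ((S \subset O) && (nth j0 (L S) i \in O))%:R
    <= (S \subset O)%:R * v.
  move=> S /eqP cS; case: (boolP (S \subset O)) => SO; last first.
    by rewrite big1 ?mul0r // => i _; rewrite /= mulr0.
  rewrite mul1r.
  have [uL sL subL] := HL S cS.
  set b := [seq x \in O | x <- L S].
  have -> : \sum_(0 <= i < n - k) cc R k i.+1 * (true && (nth j0 (L S) i \in O))%:R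
      = \sum_(0 <= i < size b) cc R k i.+1 * (nth false b i)%:R.
    rewrite size_map sL; apply: eq_big_nat => i /andP [_ hi].
    by rewrite (nth_map j0) ?sL.
  apply: (le_trans (@seq_bound R b (fun i => cc R k i.+1) (fun i => cc_ge0 R k i.+1) (fun i => cc_dec R k i k1))).
  have kO : (k <= m)%N by rewrite -cS subset_leq_card.
  have cnt : (count id b <= m - k)%N.
    rewrite count_map -size_filter.
    have -> : (m - k = #|O :\: S|)%N by rewrite cardsD (finset.setIidPr SO) cS.
    rewrite cardE; apply: uniq_leq_size; first exact: filter_uniq.
    move=> x; rewrite mem_filter => /andP [xO xL].
    have := subL x xL; rewrite !inE => xS.
    by rewrite mem_enum !inE xS.
  have -> : v = \sum_(0 <= i < m - k) cc R k i.+1 by rewrite cc_sum // subnKC.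
  rewrite (@big_cat_nat _ _ _ (count id b) 0 (m - k)) // -[X in X <= _]addr0 lerD //; last first.
    by apply: sumr_ge0 => i _; exact: cc_ge0.
apply: (le_trans (ler_sum _ step)).
have -> : \sum_(S : {set 'I_n} | #|S| == k) (S \subset O)%:R * v
    = \sum_(S in [set S : {set 'I_n} | S \subset O & #|S| == k]) v.
  rewrite big_mkcond [RHS]big_mkcond; apply: eq_bigr => S _; rewrite !inE.
  by case: (S \subset O); case: (#|S| == k); rewrite /= ?mul1r ?mul0r.
rewrite sumr_const cards_draws -/m.
have [m0|mpos] := posnP m.
  by rewrite /v m0 invr0 mulr0 mul0rn ler0n.
rewrite le_eqVlt; apply/orP; left; apply/eqP.
rewrite /v -[_ *+ 'C(m, k)]mulr_natr mulrAC -natrM -mul_bin_down natrM mulrAC divff ?mul1r //.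
by rewrite pnatr_eq0 -lt0n.
Qed.

Lemma le_integral_nm (d : measure_display) (T : measurableType d) (R : realType)
  (mu : {measure set T -> \bar R}) (f g : T -> \bar R) :
  (forall x, (0 <= f x)%E) -> (forall x, (f x <= g x)%E) ->
  (\int[mu]_x f x <= \int[mu]_x g x)%E.
Proof.
move=> f0 fg; rewrite !ge0_integralTE //; last by move=> x; exact: le_trans (f0 x) (fg x).
apply: ereal_sup_le => _ [h hf <-]; exists h => //= x.
exact: le_trans (hf x) (fg x).
Qed.

Lemma inter_ev_meas (d : measure_display) (T : measurableType d) n (A : 'I_n -> set T)
  (hA : forall i, measurable (A i)) S j : measurable (inter_ev A S j).
Proof.
rewrite /inter_ev; apply: measurableI => //.
have -> : [set t | forall i, i \in S -> A i t] = \bigcap_(i in [set` enum S]) A i.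
  by apply/seteqP; split => t /= h i; [rewrite /= mem_enum; exact: h|
     move=> iS; apply: h; rewrite /= mem_enum].
rewrite bigcap_seq; exact: bigsetI_measurable.
Qed.

Theorem lemma5 (d : measure_display) (T : measurableType d) (R : realType)
  (P : probability T R) (n : nat) (A : 'I_n -> set T)
  (hA : forall i, measurable (A i)) (k : nat) (hk1 : (1 <= k)%N) (hkn : (k < n)%N) :
  (\int[P]_x (('C((count_occ A x).-1, k))%:R : R)%:E
   >= (\sum_(S : {set 'I_n} | #|S| == k)
        \sum_(1 <= s < (n - k).+1)
          W P A S s * (k%:R / (((k + s) * (k + s - 1))%N)%:R))%:E)%E.
Proof.
have n0 : (0 < n)%N by lia.
pose j0 : 'I_n := Ordinal n0.
pose f S j := fine (P (inter_ev A S j)).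
pose L S := sort (relpre (f S) (fun x y : R => y <= x)) (enum (~: S)).
have HL : forall S : {set 'I_n}, #|S| = k ->
    [/\ uniq (L S), size (L S) = (n - k)%N & {subset L S <= ~: S}].
  move=> S cS; split.
  - by rewrite sort_uniq enum_uniq.
  - rewrite size_sort -cardE; move: (cardsC S); rewrite card_ord cS => e; apply: (@addnI k); rewrite e subnKC //; exact: ltnW.
  - by move=> x; rewrite mem_sort mem_enum.
have eqR : forall S : {set 'I_n}, #|S| == k ->
    \sum_(1 <= s < (n - k).+1) W P A S s * (k%:R / (((k + s) * (k + s - 1))%N)%:R)
    = \sum_(0 <= i < n - k) cc R k i.+1 * f S (nth j0 (L S) i).
  move=> S /eqP cS; have [_ sL _] := HL S cS.
  rewrite big_add1 /=; apply: eq_big_nat => i /andP [_ hi].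
  rewrite /W /= sort_map (nth_map j0) ?sL // mulrC.
  by [].
rewrite (eq_bigr _ eqR).
pose F t := \sum_(S : {set 'I_n} | #|S| == k) \sum_(0 <= i < n - k)
     cc R k i.+1 * \1_(inter_ev A S (nth j0 (L S) i)) t.
have intF : (\int[P]_x (F x)%:E = (\sum_(S : {set 'I_n} | #|S| == k)
     \sum_(0 <= i < n - k) cc R k i.+1 * f S (nth j0 (L S) i))%:E)%E.
  have eqF : forall x, (F x)%:E = (\sum_(S : {set 'I_n}) (if #|S| == k then
      \sum_(0 <= i < n - k) (cc R k i.+1 * \1_(inter_ev A S (nth j0 (L S) i)) x)%:E
      else 0))%E.
    move=> x; rewrite /F -sumEFin big_mkcond; apply: eq_bigr => S _.
    by case: ifP => _ //; rewrite sumEFin.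
  have mI : forall S i, measurable_fun setT
      (fun x : T => ((cc R k i.+1 * \1_(inter_ev A S (nth j0 (L S) i)) x)%:E : \bar R)).
    move=> S i; apply/measurable_EFinP.
    apply: measurable_funM => //.
    by apply: measurable_indic; exact: inter_ev_meas.
  have I0 : forall S i x, setT x ->
      (0 <= (cc R k i.+1 * \1_(inter_ev A S (nth j0 (L S) i)) x)%:E)%E.
    by move=> S i x _; rewrite lee_fin mulr_ge0 ?cc_ge0.
  have mF : forall S : {set 'I_n}, measurable_fun setT (fun x => if #|S| == k then
      \sum_(0 <= i < n - k) (cc R k i.+1 * \1_(inter_ev A S (nth j0 (L S) i)) x)%:E
      else 0%E).
    move=> S; case: (#|S| == k); last exact: measurable_cst.
    by apply: emeasurable_sum => i; exact: mI.
  have F0 : forall (S : {set 'I_n}) x, setT x -> (0 <= (if #|S| == k then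
      \sum_(0 <= i < n - k) (cc R k i.+1 * \1_(inter_ev A S (nth j0 (L S) i)) x)%:E
      else 0))%E.
    move=> S x _; case: ifP => _ //; apply: sume_ge0 => i _; exact: I0.
  transitivity ((\int[P]_x (\sum_(S : {set 'I_n}) (if #|S| == k then
      \sum_(0 <= i < n - k) (cc R k i.+1 * \1_(inter_ev A S (nth j0 (L S) i)) x)%:E
      else 0))%E)%E); first by apply: eq_integral => x _; exact: eqF.
  rewrite (ge0_integral_sum _ measurableT mF F0).
  rewrite -sumEFin [RHS]big_mkcond /=; apply: eq_bigr => S _.
  case: ifP => _; last by rewrite integral0.
  rewrite (ge0_integral_sum _ measurableT (mI S) (I0 S)) -sumEFin.
  apply: eq_bigr => i _.
  rewrite (integralZl_indic measurableT (fun _ => inter_ev A S (nth j0 (L S) i))); last 2 first.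
  - by move=> h; have := cc_ge0 R k i.+1; rewrite leNgt h.
  - exact: inter_ev_meas.
  rewrite integral_indic //; last exact: inter_ev_meas.
  rewrite setIT.
  by rewrite [in RHS]EFinM /f fineK //; apply: fin_num_measure; exact: inter_ev_meas.
rewrite -intF; apply: le_integral_nm.
  move=> x; rewrite lee_fin; apply: sumr_ge0 => S _; apply: sumr_ge0 => i _.
  by rewrite mulr_ge0 ?cc_ge0.
move=> t; rewrite lee_fin /F.
set O := [set i : 'I_n | `[< A i t >]]%SET.
have -> : count_occ A t = #|O|.
  rewrite /count_occ; apply: eq_card => i; apply/idP/idP => h.
    by have /= h' := set_mem h; rewrite /O inE.
  by apply: mem_set; move: h; rewrite /O inE.
have hind : forall S j, \1_(inter_ev A S j) t = ((S \subset O) && (j \in O))%:R :> R.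
  move=> S j; rewrite indicE; congr (_%:R); congr nat_of_bool; apply/idP/idP.
    move/set_mem => [/= hS hj]; apply/andP; split.
      by apply/fintype.subsetP => i iS; rewrite /O inE; apply/asboolP; exact: hS i iS.
    by rewrite /O inE; apply/asboolP.
  move/andP => [/fintype.subsetP hS hj]; apply: mem_set; split => /=.
    by move=> i iS; have := hS i iS; rewrite /O inE => /asboolP.
  by move: hj; rewrite /O inE => /asboolP.
under eq_bigr => S _ do under eq_big_nat => i _ do rewrite hind.
exact: (@point_bound R n k hk1 O L HL j0).
Qed.
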